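(* Let $\Psi\in\Delta_7$ be a unit spinor, $\omega^3(X,Y,Z):=-\big(X\cdot Y\cdot Z\cdot\Psi,\Psi\big)$, and fix $(p,q)\in\mathbb{R}^2$. Call a pair $(\mathrm{T},\mathrm{F})$ with $\mathrm{T}\in\Lambda^3(\mathbb{R}^7)$, $\mathrm{F}\in\Lambda^4(\mathbb{R}^7)$ admissible if for all $X\in\mathbb{R}^7$ $$\Big(X+\tfrac14\,(X\lrcorner\mathrm{T})+p\,(X\lrcorner\mathrm{F})+q\,(X\wedge\mathrm{F})\Big)\cdot\Psi=0 .$$ Among pairs of the form $\mathrm{T}=a\,\omega^3$, $\mathrm{F}=f\,( *\omega^3)$ with $a,f\in\mathbb{R}$, the admissible ones form the $1$-parameter family $$\mathrm{T}=\Big[\frac{(12q-16p)\,f}{3}-\frac43\Big]\,\omega^3,\qquad \mathrm{F}=f\,( *\omega^3),\qquad f\in\mathbb{R}.$$ In particular, if $4p-3q=0$, the torsion form does not depend on the flux form: $\mathrm{T}=-\tfrac43\,\omega^3$ and $\mathrm{F}=f\,( *\omega^3)$.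
   Context: $\mathbb{R}^7$ carries the Euclidean metric; $\Delta_7$ is the real $8$-dimensional spin representation with $\mathrm{Spin}(7)$-invariant inner product $(\cdot,\cdot)$; Clifford multiplication satisfies $X\cdot X=-|X|^2$ and $k$-forms act by Clifford multiplication ($e_{i_1}\wedge\cdots\wedge e_{i_k}\mapsto e_{i_1}\cdots e_{i_k}$, distinct indices, orthonormal basis). One has $\omega^3\cdot\Psi=-7\Psi$. $*$ is the Hodge star for the orientation fixed by the realization of the spin representation, for which $( *\omega^3)\cdot\Psi=-7\Psi$. *)

(* Defs.v *)
From HB Require Import structures.
From mathcomp Require Import all_boot all_order all_algebra.
Set Implicit Arguments. Unset Strict Implicit. Unset Printing Implicit Defensive.
Import Order.TTheory GRing.Theory Num.Theory.
Local Open Scope ring_scope.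

(* Real 8-dim spin representation Delta_7 = R^8 (column vectors): the
   generator e_k of R^7 (k = 0..6, i.e. e_1..e_7) acts by the matrix
   gamma k, which is left multiplication by the imaginary octonion unit
   e_{k+1} (Fano triples (124)(235)(346)(457)(561)(672)(713)).  These are
   skew-symmetric with gamma_i gamma_j + gamma_j gamma_i = -2 delta_ij, so
   the standard dot product on R^8 is Spin(7)-invariant. *)
Definition gamma_tab : seq (seq (seq int)) :=
[:: [:: [:: 0; -1; 0; 0; 0; 0; 0; 0]; [:: 1; 0; 0; 0; 0; 0; 0; 0]; [:: 0; 0; 0; 0; -1; 0; 0; 0]; [:: 0; 0; 0; 0; 0; 0; 0; -1]; [:: 0; 0; 1; 0; 0; 0; 0; 0]; [:: 0; 0; 0; 0; 0; 0; -1; 0]; [:: 0; 0; 0; 0; 0; 1; 0; 0]; [:: 0; 0; 0; 1; 0; 0; 0; 0]];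
  [:: [:: 0; 0; -1; 0; 0; 0; 0; 0]; [:: 0; 0; 0; 0; 1; 0; 0; 0]; [:: 1; 0; 0; 0; 0; 0; 0; 0]; [:: 0; 0; 0; 0; 0; -1; 0; 0]; [:: 0; -1; 0; 0; 0; 0; 0; 0]; [:: 0; 0; 0; 1; 0; 0; 0; 0]; [:: 0; 0; 0; 0; 0; 0; 0; -1]; [:: 0; 0; 0; 0; 0; 0; 1; 0]];
  [:: [:: 0; 0; 0; -1; 0; 0; 0; 0]; [:: 0; 0; 0; 0; 0; 0; 0; 1]; [:: 0; 0; 0; 0; 0; 1; 0; 0]; [:: 1; 0; 0; 0; 0; 0; 0; 0]; [:: 0; 0; 0; 0; 0; 0; -1; 0]; [:: 0; 0; -1; 0; 0; 0; 0; 0]; [:: 0; 0; 0; 0; 1; 0; 0; 0]; [:: 0; -1; 0; 0; 0; 0; 0; 0]];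
  [:: [:: 0; 0; 0; 0; -1; 0; 0; 0]; [:: 0; 0; -1; 0; 0; 0; 0; 0]; [:: 0; 1; 0; 0; 0; 0; 0; 0]; [:: 0; 0; 0; 0; 0; 0; 1; 0]; [:: 1; 0; 0; 0; 0; 0; 0; 0]; [:: 0; 0; 0; 0; 0; 0; 0; -1]; [:: 0; 0; 0; -1; 0; 0; 0; 0]; [:: 0; 0; 0; 0; 0; 1; 0; 0]];
  [:: [:: 0; 0; 0; 0; 0; -1; 0; 0]; [:: 0; 0; 0; 0; 0; 0; 1; 0]; [:: 0; 0; 0; -1; 0; 0; 0; 0]; [:: 0; 0; 1; 0; 0; 0; 0; 0]; [:: 0; 0; 0; 0; 0; 0; 0; 1]; [:: 1; 0; 0; 0; 0; 0; 0; 0]; [:: 0; -1; 0; 0; 0; 0; 0; 0]; [:: 0; 0; 0; 0; -1; 0; 0; 0]];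
  [:: [:: 0; 0; 0; 0; 0; 0; -1; 0]; [:: 0; 0; 0; 0; 0; -1; 0; 0]; [:: 0; 0; 0; 0; 0; 0; 0; 1]; [:: 0; 0; 0; 0; -1; 0; 0; 0]; [:: 0; 0; 0; 1; 0; 0; 0; 0]; [:: 0; 1; 0; 0; 0; 0; 0; 0]; [:: 1; 0; 0; 0; 0; 0; 0; 0]; [:: 0; 0; -1; 0; 0; 0; 0; 0]];
  [:: [:: 0; 0; 0; 0; 0; 0; 0; -1]; [:: 0; 0; 0; -1; 0; 0; 0; 0]; [:: 0; 0; 0; 0; 0; 0; -1; 0]; [:: 0; 1; 0; 0; 0; 0; 0; 0]; [:: 0; 0; 0; 0; 0; -1; 0; 0]; [:: 0; 0; 0; 0; 1; 0; 0; 0]; [:: 0; 0; 1; 0; 0; 0; 0; 0]; [:: 1; 0; 0; 0; 0; 0; 0; 0]]]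
.

Section Defs.
Variable R : realFieldType.

Definition gamma (k : 'I_7) : 'M[R]_8 :=
  \matrix_(i < 8, j < 8) (nth 0 (nth [::] (nth [::] gamma_tab k) i) j)%:~R.

Definition spinor := 'cV[R]_8.

Definition sp (u v : spinor) : R := \sum_(l < 8) u l 0 * v l 0.

Definition vec7 := 'I_7 -> R.
(* k-forms, given by their (alternating) components on basis vectors:
   form_k w i1 .. ik = w(e_i1, ..., e_ik). *)
Definition form2 := 'I_7 -> 'I_7 -> R.
Definition form3 := 'I_7 -> 'I_7 -> 'I_7 -> R.
Definition form4 := 'I_7 -> 'I_7 -> 'I_7 -> 'I_7 -> R.
Definition form5 := 'I_7 -> 'I_7 -> 'I_7 -> 'I_7 -> 'I_7 -> R.

Definition clif1 (X : vec7) : 'M[R]_8 := \sum_(i < 7) X i *: gamma i.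
Definition clif2 (w : form2) : 'M[R]_8 :=
  \sum_(i < 7) \sum_(j < 7 | (i < j)%N) w i j *: (gamma i *m gamma j).
Definition clif3 (w : form3) : 'M[R]_8 :=
  \sum_(i < 7) \sum_(j < 7 | (i < j)%N) \sum_(k < 7 | (j < k)%N)
     w i j k *: (gamma i *m gamma j *m gamma k).
Definition clif4 (w : form4) : 'M[R]_8 :=
  \sum_(i < 7) \sum_(j < 7 | (i < j)%N) \sum_(k < 7 | (j < k)%N) \sum_(l < 7 | (k < l)%N)
     w i j k l *: (gamma i *m gamma j *m gamma k *m gamma l).
Definition clif5 (w : form5) : 'M[R]_8 :=
  \sum_(i < 7) \sum_(j < 7 | (i < j)%N) \sum_(k < 7 | (j < k)%N) \sum_(l < 7 | (k < l)%N)
  \sum_(m < 7 | (l < m)%N)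
     w i j k l m *: (gamma i *m gamma j *m gamma k *m gamma l *m gamma m).

Definition ctr3 (X : vec7) (T : form3) : form2 :=
  fun j k => \sum_(i < 7) X i * T i j k.
Definition ctr4 (X : vec7) (F : form4) : form3 :=
  fun j k l => \sum_(i < 7) X i * F i j k l.
Definition wedge14 (X : vec7) (F : form4) : form5 :=
  fun a b c d e => X a * F b c d e - X b * F a c d e + X c * F a b d e
                   - X d * F a b c e + X e * F a b c d.

Definition omega3 (Psi : spinor) : form3 :=
  fun i j k => - sp (gamma i *m gamma j *m gamma k *m Psi) Psi.

Definition ninv (s : seq nat) : nat :=
  \sum_(i < size s) \sum_(j < size s | (i < j)%N) (nth 0%N s j < nth 0%N s i)%N.
Definition levi (s : seq 'I_7) : R :=
  if uniq s then (-1) ^+ ninv (map val s) else 0.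

(* Orientation fixed by the realization: volume form = - e_1/\...^e_7
   (equivalently, e_1...e_7 acts as -Id and then the convention
   ( *omega^3).Psi = -7 Psi holds). *)
Definition orient : R := -1.
Definition hodge3 (T : form3) : form4 :=
  fun i j k l => orient *
    \sum_(a < 7) \sum_(b < 7 | (a < b)%N) \sum_(c < 7 | (b < c)%N)
       T a b c * levi [:: a; b; c; i; j; k; l].

Definition admissible (p q : R) (Psi : spinor) (T : form3) (F : form4) : Prop :=
  forall X : vec7,
    (clif1 X + (1/4) *: clif2 (ctr3 X T) + p *: clif3 (ctr4 X F)
       + q *: clif5 (wedge14 X F)) *m Psi = 0.

End Defs.

(* Main.v *)
Require Import Defs.
From HB Require Import structures.
From mathcomp Require Import all_boot all_order all_algebra.
From mathcomp Require Import ring.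
From Stdlib Require Import FunctionalExtensionality.
Set Implicit Arguments. Unset Strict Implicit. Unset Printing Implicit Defensive.
Import Order.TTheory GRing.Theory Num.Theory.
Local Open Scope ring_scope.


Notation O7 k := (@Ordinal 7 k isT).

Lemma sum7c (V : zmodType) (P : pred 'I_7) (F : 'I_7 -> V) :
  \sum_(i < 7 | P i) F i =
  (if P (O7 0) then F (O7 0) else 0) + (if P (O7 1) then F (O7 1) else 0) +
  (if P (O7 2) then F (O7 2) else 0) + (if P (O7 3) then F (O7 3) else 0) +
  (if P (O7 4) then F (O7 4) else 0) + (if P (O7 5) then F (O7 5) else 0) +
  (if P (O7 6) then F (O7 6) else 0).
Proof.
rewrite big_mkcond !big_ord_recl big_ord0 /= addr0 !addrA.
by congr (_ + _ + _ + _ + _ + _ + _); congr (if P _ then F _ else _); apply: val_inj.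
Qed.

Lemma ninv7 (a b c d e f g : nat) : ninv [:: a;b;c;d;e;f;g] =
  ((b < a) + (c < a) + (d < a) + (e < a) + (f < a) + (g < a) +
   (c < b) + (d < b) + (e < b) + (f < b) + (g < b) +
   (d < c) + (e < c) + (f < c) + (g < c) +
   (e < d) + (f < d) + (g < d) + (f < e) + (g < e) + (g < f))%N.
Proof.
rewrite /ninv /=. rewrite !big_ord_recl big_ord0 /=.
rewrite !(big_mkcond (fun j : 'I_7 => _ < _)%N) /= !big_ord_recl !big_ord0 /=.
rewrite !addn0 !add0n !addnA. reflexivity.
Qed.

Section S0.
Variable R : realFieldType.

Lemma levi7 (a b c d e f g : 'I_7) : levi R [:: a;b;c;d;e;f;g] =
  if uniq [:: a;b;c;d;e;f;g] then (-1) ^+ (ninv [:: val a; val b; val c; val d; val e; val f; val g]) else 0.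
Proof. by []. Qed.

Lemma sum8 (F : 'I_8 -> R) :
  \sum_(i < 8) F i =
  F (@Ordinal 8 0 isT) + F (@Ordinal 8 1 isT) + F (@Ordinal 8 2 isT) + F (@Ordinal 8 3 isT) +
  F (@Ordinal 8 4 isT) + F (@Ordinal 8 5 isT) + F (@Ordinal 8 6 isT) + F (@Ordinal 8 7 isT).
Proof.
rewrite !big_ord_recl big_ord0 addr0 !addrA.
by congr (_ + _ + _ + _ + _ + _ + _ + _); congr (F _); apply: val_inj.
Qed.

Definition colL (s : seq R) : 'cV[R]_8 := \col_(r < 8) nth 0 s r.

Lemma colL8 (a0 a1 a2 a3 a4 a5 a6 a7 b0 b1 b2 b3 b4 b5 b6 b7 : R) :
  a0 = b0 -> a1 = b1 -> a2 = b2 -> a3 = b3 -> a4 = b4 -> a5 = b5 -> a6 = b6 -> a7 = b7 ->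
  colL [:: a0; a1; a2; a3; a4; a5; a6; a7] = colL [:: b0; b1; b2; b3; b4; b5; b6; b7].
Proof. by move=> -> -> -> -> -> -> -> ->. Qed.

Lemma colL_add (a0 a1 a2 a3 a4 a5 a6 a7 b0 b1 b2 b3 b4 b5 b6 b7 : R) :
  colL [:: a0; a1; a2; a3; a4; a5; a6; a7] + colL [:: b0; b1; b2; b3; b4; b5; b6; b7] =
  colL [:: a0 + b0; a1 + b1; a2 + b2; a3 + b3; a4 + b4; a5 + b5; a6 + b6; a7 + b7].
Proof.
apply/matrixP => r c; rewrite !mxE.
by case: r => [[|[|[|[|[|[|[|[|]]]]]]]] Hr].
Qed.

Lemma colL_scale (c a0 a1 a2 a3 a4 a5 a6 a7 : R) :
  c *: colL [:: a0; a1; a2; a3; a4; a5; a6; a7] =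
  colL [:: c * a0; c * a1; c * a2; c * a3; c * a4; c * a5; c * a6; c * a7].
Proof.
apply/matrixP => r d; rewrite !mxE.
by case: r => [[|[|[|[|[|[|[|[|]]]]]]]] Hr].
Qed.

Lemma sp_colL (s t : seq R) : sp (colL s) (colL t) =
  s`_0 * t`_0 + s`_1 * t`_1 + s`_2 * t`_2 + s`_3 * t`_3 + s`_4 * t`_4 + s`_5 * t`_5 + s`_6 * t`_6 + s`_7 * t`_7.
Proof. by rewrite /sp sum8 !mxE. Qed.

Definition gact (k : nat) (s : seq R) : seq R :=
  match k with
  | 0 => [:: - s`_1; s`_0; - s`_4; - s`_7; s`_2; - s`_6; s`_5; s`_3]
  | 1 => [:: - s`_2; s`_4; s`_0; - s`_5; - s`_1; s`_3; - s`_7; s`_6]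
  | 2 => [:: - s`_3; s`_7; s`_5; s`_0; - s`_6; - s`_2; s`_4; - s`_1]
  | 3 => [:: - s`_4; - s`_2; s`_1; s`_6; s`_0; - s`_7; - s`_3; s`_5]
  | 4 => [:: - s`_5; s`_6; - s`_3; s`_2; s`_7; s`_0; - s`_1; - s`_4]
  | 5 => [:: - s`_6; - s`_5; s`_7; - s`_4; s`_3; s`_1; s`_0; - s`_2]
  | _ => [:: - s`_7; - s`_3; - s`_6; s`_1; - s`_5; s`_4; s`_2; s`_0]
  end.

Lemma gamL (k : 'I_7) s : gamma R k *m colL s = colL (gact k s).
Proof.
apply/matrixP => r c; rewrite !mxE sum8 !mxE /=.
case: k => [[|[|[|[|[|[|[|]]]]]]] Hk] //=;
case: r => [[|[|[|[|[|[|[|[|]]]]]]]] Hr] //=; rewrite ?mul0r ?mul1r ?add0r ?addr0 ?mulN1r //.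
Qed.

End S0.


Lemma enum7 : index_enum 'I_7 = [:: O7 0; O7 1; O7 2; O7 3; O7 4; O7 5; O7 6].
Proof.
apply: (inj_map val_inj). rewrite [index_enum _]unlock -enumT val_enum_ord. by [].
Qed.

Section S1.
Variable R : realFieldType.

Definition dotL (s t : seq R) : R :=
  s`_0 * t`_0 + s`_1 * t`_1 + s`_2 * t`_2 + s`_3 * t`_3 + s`_4 * t`_4 + s`_5 * t`_5 + s`_6 * t`_6 + s`_7 * t`_7.

Lemma omegaF s : omega3 (colL s) = fun i j k => - dotL (gact i (gact j (gact k s))) s.
Proof.
apply: functional_extensionality => i; apply: functional_extensionality => j.
apply: functional_extensionality => k.
by rewrite /omega3 -!mulmxA !gamL sp_colL.
Qed.

Lemma clif1E (X : vec7 R) (s : seq R) (r : 'I_8) : (clif1 X *m colL s) r 0 = \sum_(i < 7) X i * nth 0 (gact i s) r.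
Proof.
rewrite /clif1 mulmx_suml summxE; apply: eq_bigr => i _.
by rewrite -scalemxAl gamL !mxE.
Qed.

Lemma clif2E (w : form2 R) (s : seq R) (r : 'I_8) : (clif2 w *m colL s) r 0 =
  \sum_(i < 7) \sum_(j < 7 | (i < j)%N) w i j * nth 0 (gact i (gact j s)) r.
Proof.
rewrite /clif2 mulmx_suml summxE; apply: eq_bigr => i _.
rewrite mulmx_suml summxE; apply: eq_bigr => j _.
by rewrite -scalemxAl -!mulmxA !gamL !mxE.
Qed.

Lemma PT (X : vec7 R) (a : R) (s : seq R) :
  clif2 (ctr3 X (fun i j k => a * omega3 (colL s) i j k)) *m colL s =
  (3 * a * sp (colL s) (colL s)) *: (clif1 X *m colL s).
Proof.
apply/matrixP => r c; rewrite [c]ord1 clif2E mxE clif1E sp_colL /ctr3 omegaF /dotL.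
rewrite enum7 bigop.unlock.
rewrite /=.
case: r => [[|[|[|[|[|[|[|[|]]]]]]]] Hr] //=.
all: ring.
Qed.

Lemma clif3E (w : form3 R) (s : seq R) (r : 'I_8) : (clif3 w *m colL s) r 0 =
  \sum_(i < 7) \sum_(j < 7 | (i < j)%N) \sum_(k < 7 | (j < k)%N)
     w i j k * nth 0 (gact i (gact j (gact k s))) r.
Proof.
rewrite /clif3 mulmx_suml summxE; apply: eq_bigr => i _.
rewrite mulmx_suml summxE; apply: eq_bigr => j _.
rewrite mulmx_suml summxE; apply: eq_bigr => k _.
by rewrite -scalemxAl -!mulmxA !gamL !mxE.
Qed.

Lemma clif5E (w : form5 R) (s : seq R) (r : 'I_8) : (clif5 w *m colL s) r 0 =
  \sum_(i < 7) \sum_(j < 7 | (i < j)%N) \sum_(k < 7 | (j < k)%N) \sum_(l < 7 | (k < l)%N)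
  \sum_(m < 7 | (l < m)%N)
     w i j k l m * nth 0 (gact i (gact j (gact k (gact l (gact m s))))) r.
Proof.
rewrite /clif5 mulmx_suml summxE; apply: eq_bigr => i _.
rewrite mulmx_suml summxE; apply: eq_bigr => j _.
rewrite mulmx_suml summxE; apply: eq_bigr => k _.
rewrite mulmx_suml summxE; apply: eq_bigr => l _.
rewrite mulmx_suml summxE; apply: eq_bigr => m _.
by rewrite -scalemxAl -!mulmxA !gamL !mxE.
Qed.

Definition ninvE (l : seq nat) : nat :=
  match l with
  | [:: a; b; c; d; e; f; g] =>
   ((b < a) + (c < a) + (d < a) + (e < a) + (f < a) + (g < a) +
   (c < b) + (d < b) + (e < b) + (f < b) + (g < b) +
   (d < c) + (e < c) + (f < c) + (g < c) +
   (e < d) + (f < d) + (g < d) + (f < e) + (g < e) + (g < f))%N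
  | _ => 0%N end.

Definition sgnN (l : seq nat) : R := if odd (ninvE l) then -1 else 1.

Fixpoint memN (x : nat) (l : seq nat) : bool :=
  match l with [::] => false | y :: l' => eqn x y || memN x l' end.
Fixpoint uniqN (l : seq nat) : bool :=
  match l with [::] => true | x :: l' => ~~ memN x l' && uniqN l' end.
Lemma uniqNE l : uniqN l = uniq l.
Proof.
elim: l => //= x l ->; congr (~~ _ && _).
by elim: l => //= y l ->; rewrite in_cons.
Qed.

Lemma hodgeF (T : form3 R) : hodge3 T = fun i j k l => orient R *
    \sum_(a < 7) \sum_(b < 7 | (a < b)%N) \sum_(c < 7 | (b < c)%N)
       (if uniqN [:: val a; val b; val c; val i; val j; val k; val l]
        then T a b c * sgnN [:: val a; val b; val c; val i; val j; val k; val l] else 0).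
Proof.
apply: functional_extensionality => i; apply: functional_extensionality => j.
apply: functional_extensionality => k; apply: functional_extensionality => l.
rewrite /hodge3; congr (_ * _); apply: eq_bigr => a _; apply: eq_bigr => b _; apply: eq_bigr => c _.
rewrite /levi.
have -> : uniq [:: a; b; c; i; j; k; l] = uniqN [:: val a; val b; val c; val i; val j; val k; val l].
  by rewrite uniqNE -(map_inj_uniq val_inj).
case: ifP => _; last by rewrite mulr0.
by rewrite /= ninv7 /sgnN -signr_odd; case: odd; rewrite ?expr1 ?expr0.
Qed.

End S1.


Section S2.
Variable R : realFieldType.

Lemma ctr4_012 (T : form3 R) (X : vec7 R) (f : R) : ctr4 X (fun i j k l => f * hodge3 T i j k l) (O7 0) (O7 1) (O7 2) = f * orient R * (- X (O7 3) * T (O7 4) (O7 5) (O7 6) + X (O7 4) * T (O7 3) (O7 5) (O7 6) - X (O7 5) * T (O7 3) (O7 4) (O7 6) + X (O7 6) * T (O7 3) (O7 4) (O7 5)).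
Proof. by rewrite /ctr4 hodgeF enum7 bigop.unlock /= /sgnN /=; ring. Qed.

Lemma ctr4_013 (T : form3 R) (X : vec7 R) (f : R) : ctr4 X (fun i j k l => f * hodge3 T i j k l) (O7 0) (O7 1) (O7 3) = f * orient R * (X (O7 2) * T (O7 4) (O7 5) (O7 6) - X (O7 4) * T (O7 2) (O7 5) (O7 6) + X (O7 5) * T (O7 2) (O7 4) (O7 6) - X (O7 6) * T (O7 2) (O7 4) (O7 5)).
Proof. by rewrite /ctr4 hodgeF enum7 bigop.unlock /= /sgnN /=; ring. Qed.

Lemma ctr4_014 (T : form3 R) (X : vec7 R) (f : R) : ctr4 X (fun i j k l => f * hodge3 T i j k l) (O7 0) (O7 1) (O7 4) = f * orient R * (- X (O7 2) * T (O7 3) (O7 5) (O7 6) + X (O7 3) * T (O7 2) (O7 5) (O7 6) - X (O7 5) * T (O7 2) (O7 3) (O7 6) + X (O7 6) * T (O7 2) (O7 3) (O7 5)).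
Proof. by rewrite /ctr4 hodgeF enum7 bigop.unlock /= /sgnN /=; ring. Qed.

Lemma ctr4_015 (T : form3 R) (X : vec7 R) (f : R) : ctr4 X (fun i j k l => f * hodge3 T i j k l) (O7 0) (O7 1) (O7 5) = f * orient R * (X (O7 2) * T (O7 3) (O7 4) (O7 6) - X (O7 3) * T (O7 2) (O7 4) (O7 6) + X (O7 4) * T (O7 2) (O7 3) (O7 6) - X (O7 6) * T (O7 2) (O7 3) (O7 4)).
Proof. by rewrite /ctr4 hodgeF enum7 bigop.unlock /= /sgnN /=; ring. Qed.

Lemma ctr4_016 (T : form3 R) (X : vec7 R) (f : R) : ctr4 X (fun i j k l => f * hodge3 T i j k l) (O7 0) (O7 1) (O7 6) = f * orient R * (- X (O7 2) * T (O7 3) (O7 4) (O7 5) + X (O7 3) * T (O7 2) (O7 4) (O7 5) - X (O7 4) * T (O7 2) (O7 3) (O7 5) + X (O7 5) * T (O7 2) (O7 3) (O7 4)).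
Proof. by rewrite /ctr4 hodgeF enum7 bigop.unlock /= /sgnN /=; ring. Qed.

Lemma ctr4_023 (T : form3 R) (X : vec7 R) (f : R) : ctr4 X (fun i j k l => f * hodge3 T i j k l) (O7 0) (O7 2) (O7 3) = f * orient R * (- X (O7 1) * T (O7 4) (O7 5) (O7 6) + X (O7 4) * T (O7 1) (O7 5) (O7 6) - X (O7 5) * T (O7 1) (O7 4) (O7 6) + X (O7 6) * T (O7 1) (O7 4) (O7 5)).
Proof. by rewrite /ctr4 hodgeF enum7 bigop.unlock /= /sgnN /=; ring. Qed.

Lemma ctr4_024 (T : form3 R) (X : vec7 R) (f : R) : ctr4 X (fun i j k l => f * hodge3 T i j k l) (O7 0) (O7 2) (O7 4) = f * orient R * (X (O7 1) * T (O7 3) (O7 5) (O7 6) - X (O7 3) * T (O7 1) (O7 5) (O7 6) + X (O7 5) * T (O7 1) (O7 3) (O7 6) - X (O7 6) * T (O7 1) (O7 3) (O7 5)).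
Proof. by rewrite /ctr4 hodgeF enum7 bigop.unlock /= /sgnN /=; ring. Qed.

Lemma ctr4_025 (T : form3 R) (X : vec7 R) (f : R) : ctr4 X (fun i j k l => f * hodge3 T i j k l) (O7 0) (O7 2) (O7 5) = f * orient R * (- X (O7 1) * T (O7 3) (O7 4) (O7 6) + X (O7 3) * T (O7 1) (O7 4) (O7 6) - X (O7 4) * T (O7 1) (O7 3) (O7 6) + X (O7 6) * T (O7 1) (O7 3) (O7 4)).
Proof. by rewrite /ctr4 hodgeF enum7 bigop.unlock /= /sgnN /=; ring. Qed.

Lemma ctr4_026 (T : form3 R) (X : vec7 R) (f : R) : ctr4 X (fun i j k l => f * hodge3 T i j k l) (O7 0) (O7 2) (O7 6) = f * orient R * (X (O7 1) * T (O7 3) (O7 4) (O7 5) - X (O7 3) * T (O7 1) (O7 4) (O7 5) + X (O7 4) * T (O7 1) (O7 3) (O7 5) - X (O7 5) * T (O7 1) (O7 3) (O7 4)).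
Proof. by rewrite /ctr4 hodgeF enum7 bigop.unlock /= /sgnN /=; ring. Qed.

Lemma ctr4_034 (T : form3 R) (X : vec7 R) (f : R) : ctr4 X (fun i j k l => f * hodge3 T i j k l) (O7 0) (O7 3) (O7 4) = f * orient R * (- X (O7 1) * T (O7 2) (O7 5) (O7 6) + X (O7 2) * T (O7 1) (O7 5) (O7 6) - X (O7 5) * T (O7 1) (O7 2) (O7 6) + X (O7 6) * T (O7 1) (O7 2) (O7 5)).
Proof. by rewrite /ctr4 hodgeF enum7 bigop.unlock /= /sgnN /=; ring. Qed.

Lemma ctr4_035 (T : form3 R) (X : vec7 R) (f : R) : ctr4 X (fun i j k l => f * hodge3 T i j k l) (O7 0) (O7 3) (O7 5) = f * orient R * (X (O7 1) * T (O7 2) (O7 4) (O7 6) - X (O7 2) * T (O7 1) (O7 4) (O7 6) + X (O7 4) * T (O7 1) (O7 2) (O7 6) - X (O7 6) * T (O7 1) (O7 2) (O7 4)).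
Proof. by rewrite /ctr4 hodgeF enum7 bigop.unlock /= /sgnN /=; ring. Qed.

Lemma ctr4_036 (T : form3 R) (X : vec7 R) (f : R) : ctr4 X (fun i j k l => f * hodge3 T i j k l) (O7 0) (O7 3) (O7 6) = f * orient R * (- X (O7 1) * T (O7 2) (O7 4) (O7 5) + X (O7 2) * T (O7 1) (O7 4) (O7 5) - X (O7 4) * T (O7 1) (O7 2) (O7 5) + X (O7 5) * T (O7 1) (O7 2) (O7 4)).
Proof. by rewrite /ctr4 hodgeF enum7 bigop.unlock /= /sgnN /=; ring. Qed.

Lemma ctr4_045 (T : form3 R) (X : vec7 R) (f : R) : ctr4 X (fun i j k l => f * hodge3 T i j k l) (O7 0) (O7 4) (O7 5) = f * orient R * (- X (O7 1) * T (O7 2) (O7 3) (O7 6) + X (O7 2) * T (O7 1) (O7 3) (O7 6) - X (O7 3) * T (O7 1) (O7 2) (O7 6) + X (O7 6) * T (O7 1) (O7 2) (O7 3)).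
Proof. by rewrite /ctr4 hodgeF enum7 bigop.unlock /= /sgnN /=; ring. Qed.

Lemma ctr4_046 (T : form3 R) (X : vec7 R) (f : R) : ctr4 X (fun i j k l => f * hodge3 T i j k l) (O7 0) (O7 4) (O7 6) = f * orient R * (X (O7 1) * T (O7 2) (O7 3) (O7 5) - X (O7 2) * T (O7 1) (O7 3) (O7 5) + X (O7 3) * T (O7 1) (O7 2) (O7 5) - X (O7 5) * T (O7 1) (O7 2) (O7 3)).
Proof. by rewrite /ctr4 hodgeF enum7 bigop.unlock /= /sgnN /=; ring. Qed.

Lemma ctr4_056 (T : form3 R) (X : vec7 R) (f : R) : ctr4 X (fun i j k l => f * hodge3 T i j k l) (O7 0) (O7 5) (O7 6) = f * orient R * (- X (O7 1) * T (O7 2) (O7 3) (O7 4) + X (O7 2) * T (O7 1) (O7 3) (O7 4) - X (O7 3) * T (O7 1) (O7 2) (O7 4) + X (O7 4) * T (O7 1) (O7 2) (O7 3)).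
Proof. by rewrite /ctr4 hodgeF enum7 bigop.unlock /= /sgnN /=; ring. Qed.

Lemma ctr4_123 (T : form3 R) (X : vec7 R) (f : R) : ctr4 X (fun i j k l => f * hodge3 T i j k l) (O7 1) (O7 2) (O7 3) = f * orient R * (X (O7 0) * T (O7 4) (O7 5) (O7 6) - X (O7 4) * T (O7 0) (O7 5) (O7 6) + X (O7 5) * T (O7 0) (O7 4) (O7 6) - X (O7 6) * T (O7 0) (O7 4) (O7 5)).
Proof. by rewrite /ctr4 hodgeF enum7 bigop.unlock /= /sgnN /=; ring. Qed.

Lemma ctr4_124 (T : form3 R) (X : vec7 R) (f : R) : ctr4 X (fun i j k l => f * hodge3 T i j k l) (O7 1) (O7 2) (O7 4) = f * orient R * (- X (O7 0) * T (O7 3) (O7 5) (O7 6) + X (O7 3) * T (O7 0) (O7 5) (O7 6) - X (O7 5) * T (O7 0) (O7 3) (O7 6) + X (O7 6) * T (O7 0) (O7 3) (O7 5)).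
Proof. by rewrite /ctr4 hodgeF enum7 bigop.unlock /= /sgnN /=; ring. Qed.

Lemma ctr4_125 (T : form3 R) (X : vec7 R) (f : R) : ctr4 X (fun i j k l => f * hodge3 T i j k l) (O7 1) (O7 2) (O7 5) = f * orient R * (X (O7 0) * T (O7 3) (O7 4) (O7 6) - X (O7 3) * T (O7 0) (O7 4) (O7 6) + X (O7 4) * T (O7 0) (O7 3) (O7 6) - X (O7 6) * T (O7 0) (O7 3) (O7 4)).
Proof. by rewrite /ctr4 hodgeF enum7 bigop.unlock /= /sgnN /=; ring. Qed.

Lemma ctr4_126 (T : form3 R) (X : vec7 R) (f : R) : ctr4 X (fun i j k l => f * hodge3 T i j k l) (O7 1) (O7 2) (O7 6) = f * orient R * (- X (O7 0) * T (O7 3) (O7 4) (O7 5) + X (O7 3) * T (O7 0) (O7 4) (O7 5) - X (O7 4) * T (O7 0) (O7 3) (O7 5) + X (O7 5) * T (O7 0) (O7 3) (O7 4)).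
Proof. by rewrite /ctr4 hodgeF enum7 bigop.unlock /= /sgnN /=; ring. Qed.

Lemma ctr4_134 (T : form3 R) (X : vec7 R) (f : R) : ctr4 X (fun i j k l => f * hodge3 T i j k l) (O7 1) (O7 3) (O7 4) = f * orient R * (X (O7 0) * T (O7 2) (O7 5) (O7 6) - X (O7 2) * T (O7 0) (O7 5) (O7 6) + X (O7 5) * T (O7 0) (O7 2) (O7 6) - X (O7 6) * T (O7 0) (O7 2) (O7 5)).
Proof. by rewrite /ctr4 hodgeF enum7 bigop.unlock /= /sgnN /=; ring. Qed.

Lemma ctr4_135 (T : form3 R) (X : vec7 R) (f : R) : ctr4 X (fun i j k l => f * hodge3 T i j k l) (O7 1) (O7 3) (O7 5) = f * orient R * (- X (O7 0) * T (O7 2) (O7 4) (O7 6) + X (O7 2) * T (O7 0) (O7 4) (O7 6) - X (O7 4) * T (O7 0) (O7 2) (O7 6) + X (O7 6) * T (O7 0) (O7 2) (O7 4)).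
Proof. by rewrite /ctr4 hodgeF enum7 bigop.unlock /= /sgnN /=; ring. Qed.

Lemma ctr4_136 (T : form3 R) (X : vec7 R) (f : R) : ctr4 X (fun i j k l => f * hodge3 T i j k l) (O7 1) (O7 3) (O7 6) = f * orient R * (X (O7 0) * T (O7 2) (O7 4) (O7 5) - X (O7 2) * T (O7 0) (O7 4) (O7 5) + X (O7 4) * T (O7 0) (O7 2) (O7 5) - X (O7 5) * T (O7 0) (O7 2) (O7 4)).
Proof. by rewrite /ctr4 hodgeF enum7 bigop.unlock /= /sgnN /=; ring. Qed.

Lemma ctr4_145 (T : form3 R) (X : vec7 R) (f : R) : ctr4 X (fun i j k l => f * hodge3 T i j k l) (O7 1) (O7 4) (O7 5) = f * orient R * (X (O7 0) * T (O7 2) (O7 3) (O7 6) - X (O7 2) * T (O7 0) (O7 3) (O7 6) + X (O7 3) * T (O7 0) (O7 2) (O7 6) - X (O7 6) * T (O7 0) (O7 2) (O7 3)).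
Proof. by rewrite /ctr4 hodgeF enum7 bigop.unlock /= /sgnN /=; ring. Qed.

Lemma ctr4_146 (T : form3 R) (X : vec7 R) (f : R) : ctr4 X (fun i j k l => f * hodge3 T i j k l) (O7 1) (O7 4) (O7 6) = f * orient R * (- X (O7 0) * T (O7 2) (O7 3) (O7 5) + X (O7 2) * T (O7 0) (O7 3) (O7 5) - X (O7 3) * T (O7 0) (O7 2) (O7 5) + X (O7 5) * T (O7 0) (O7 2) (O7 3)).
Proof. by rewrite /ctr4 hodgeF enum7 bigop.unlock /= /sgnN /=; ring. Qed.

Lemma ctr4_156 (T : form3 R) (X : vec7 R) (f : R) : ctr4 X (fun i j k l => f * hodge3 T i j k l) (O7 1) (O7 5) (O7 6) = f * orient R * (X (O7 0) * T (O7 2) (O7 3) (O7 4) - X (O7 2) * T (O7 0) (O7 3) (O7 4) + X (O7 3) * T (O7 0) (O7 2) (O7 4) - X (O7 4) * T (O7 0) (O7 2) (O7 3)).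
Proof. by rewrite /ctr4 hodgeF enum7 bigop.unlock /= /sgnN /=; ring. Qed.

Lemma ctr4_234 (T : form3 R) (X : vec7 R) (f : R) : ctr4 X (fun i j k l => f * hodge3 T i j k l) (O7 2) (O7 3) (O7 4) = f * orient R * (- X (O7 0) * T (O7 1) (O7 5) (O7 6) + X (O7 1) * T (O7 0) (O7 5) (O7 6) - X (O7 5) * T (O7 0) (O7 1) (O7 6) + X (O7 6) * T (O7 0) (O7 1) (O7 5)).
Proof. by rewrite /ctr4 hodgeF enum7 bigop.unlock /= /sgnN /=; ring. Qed.

Lemma ctr4_235 (T : form3 R) (X : vec7 R) (f : R) : ctr4 X (fun i j k l => f * hodge3 T i j k l) (O7 2) (O7 3) (O7 5) = f * orient R * (X (O7 0) * T (O7 1) (O7 4) (O7 6) - X (O7 1) * T (O7 0) (O7 4) (O7 6) + X (O7 4) * T (O7 0) (O7 1) (O7 6) - X (O7 6) * T (O7 0) (O7 1) (O7 4)).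
Proof. by rewrite /ctr4 hodgeF enum7 bigop.unlock /= /sgnN /=; ring. Qed.

Lemma ctr4_236 (T : form3 R) (X : vec7 R) (f : R) : ctr4 X (fun i j k l => f * hodge3 T i j k l) (O7 2) (O7 3) (O7 6) = f * orient R * (- X (O7 0) * T (O7 1) (O7 4) (O7 5) + X (O7 1) * T (O7 0) (O7 4) (O7 5) - X (O7 4) * T (O7 0) (O7 1) (O7 5) + X (O7 5) * T (O7 0) (O7 1) (O7 4)).
Proof. by rewrite /ctr4 hodgeF enum7 bigop.unlock /= /sgnN /=; ring. Qed.

Lemma ctr4_245 (T : form3 R) (X : vec7 R) (f : R) : ctr4 X (fun i j k l => f * hodge3 T i j k l) (O7 2) (O7 4) (O7 5) = f * orient R * (- X (O7 0) * T (O7 1) (O7 3) (O7 6) + X (O7 1) * T (O7 0) (O7 3) (O7 6) - X (O7 3) * T (O7 0) (O7 1) (O7 6) + X (O7 6) * T (O7 0) (O7 1) (O7 3)).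
Proof. by rewrite /ctr4 hodgeF enum7 bigop.unlock /= /sgnN /=; ring. Qed.

Lemma ctr4_246 (T : form3 R) (X : vec7 R) (f : R) : ctr4 X (fun i j k l => f * hodge3 T i j k l) (O7 2) (O7 4) (O7 6) = f * orient R * (X (O7 0) * T (O7 1) (O7 3) (O7 5) - X (O7 1) * T (O7 0) (O7 3) (O7 5) + X (O7 3) * T (O7 0) (O7 1) (O7 5) - X (O7 5) * T (O7 0) (O7 1) (O7 3)).
Proof. by rewrite /ctr4 hodgeF enum7 bigop.unlock /= /sgnN /=; ring. Qed.

Lemma ctr4_256 (T : form3 R) (X : vec7 R) (f : R) : ctr4 X (fun i j k l => f * hodge3 T i j k l) (O7 2) (O7 5) (O7 6) = f * orient R * (- X (O7 0) * T (O7 1) (O7 3) (O7 4) + X (O7 1) * T (O7 0) (O7 3) (O7 4) - X (O7 3) * T (O7 0) (O7 1) (O7 4) + X (O7 4) * T (O7 0) (O7 1) (O7 3)).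
Proof. by rewrite /ctr4 hodgeF enum7 bigop.unlock /= /sgnN /=; ring. Qed.

Lemma ctr4_345 (T : form3 R) (X : vec7 R) (f : R) : ctr4 X (fun i j k l => f * hodge3 T i j k l) (O7 3) (O7 4) (O7 5) = f * orient R * (X (O7 0) * T (O7 1) (O7 2) (O7 6) - X (O7 1) * T (O7 0) (O7 2) (O7 6) + X (O7 2) * T (O7 0) (O7 1) (O7 6) - X (O7 6) * T (O7 0) (O7 1) (O7 2)).
Proof. by rewrite /ctr4 hodgeF enum7 bigop.unlock /= /sgnN /=; ring. Qed.

Lemma ctr4_346 (T : form3 R) (X : vec7 R) (f : R) : ctr4 X (fun i j k l => f * hodge3 T i j k l) (O7 3) (O7 4) (O7 6) = f * orient R * (- X (O7 0) * T (O7 1) (O7 2) (O7 5) + X (O7 1) * T (O7 0) (O7 2) (O7 5) - X (O7 2) * T (O7 0) (O7 1) (O7 5) + X (O7 5) * T (O7 0) (O7 1) (O7 2)).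
Proof. by rewrite /ctr4 hodgeF enum7 bigop.unlock /= /sgnN /=; ring. Qed.

Lemma ctr4_356 (T : form3 R) (X : vec7 R) (f : R) : ctr4 X (fun i j k l => f * hodge3 T i j k l) (O7 3) (O7 5) (O7 6) = f * orient R * (X (O7 0) * T (O7 1) (O7 2) (O7 4) - X (O7 1) * T (O7 0) (O7 2) (O7 4) + X (O7 2) * T (O7 0) (O7 1) (O7 4) - X (O7 4) * T (O7 0) (O7 1) (O7 2)).
Proof. by rewrite /ctr4 hodgeF enum7 bigop.unlock /= /sgnN /=; ring. Qed.

Lemma ctr4_456 (T : form3 R) (X : vec7 R) (f : R) : ctr4 X (fun i j k l => f * hodge3 T i j k l) (O7 4) (O7 5) (O7 6) = f * orient R * (- X (O7 0) * T (O7 1) (O7 2) (O7 3) + X (O7 1) * T (O7 0) (O7 2) (O7 3) - X (O7 2) * T (O7 0) (O7 1) (O7 3) + X (O7 3) * T (O7 0) (O7 1) (O7 2)).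
Proof. by rewrite /ctr4 hodgeF enum7 bigop.unlock /= /sgnN /=; ring. Qed.

Lemma hodge_0123 (T : form3 R) : hodge3 T (O7 0) (O7 1) (O7 2) (O7 3) = orient R * ( T (O7 4) (O7 5) (O7 6)).
Proof. by rewrite hodgeF enum7 bigop.unlock /= /sgnN /=; ring. Qed.

Lemma hodge_0124 (T : form3 R) : hodge3 T (O7 0) (O7 1) (O7 2) (O7 4) = orient R * (- T (O7 3) (O7 5) (O7 6)).
Proof. by rewrite hodgeF enum7 bigop.unlock /= /sgnN /=; ring. Qed.

Lemma hodge_0125 (T : form3 R) : hodge3 T (O7 0) (O7 1) (O7 2) (O7 5) = orient R * ( T (O7 3) (O7 4) (O7 6)).
Proof. by rewrite hodgeF enum7 bigop.unlock /= /sgnN /=; ring. Qed.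

Lemma hodge_0126 (T : form3 R) : hodge3 T (O7 0) (O7 1) (O7 2) (O7 6) = orient R * (- T (O7 3) (O7 4) (O7 5)).
Proof. by rewrite hodgeF enum7 bigop.unlock /= /sgnN /=; ring. Qed.

Lemma hodge_0134 (T : form3 R) : hodge3 T (O7 0) (O7 1) (O7 3) (O7 4) = orient R * ( T (O7 2) (O7 5) (O7 6)).
Proof. by rewrite hodgeF enum7 bigop.unlock /= /sgnN /=; ring. Qed.

Lemma hodge_0135 (T : form3 R) : hodge3 T (O7 0) (O7 1) (O7 3) (O7 5) = orient R * (- T (O7 2) (O7 4) (O7 6)).
Proof. by rewrite hodgeF enum7 bigop.unlock /= /sgnN /=; ring. Qed.

Lemma hodge_0136 (T : form3 R) : hodge3 T (O7 0) (O7 1) (O7 3) (O7 6) = orient R * ( T (O7 2) (O7 4) (O7 5)).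
Proof. by rewrite hodgeF enum7 bigop.unlock /= /sgnN /=; ring. Qed.

Lemma hodge_0145 (T : form3 R) : hodge3 T (O7 0) (O7 1) (O7 4) (O7 5) = orient R * ( T (O7 2) (O7 3) (O7 6)).
Proof. by rewrite hodgeF enum7 bigop.unlock /= /sgnN /=; ring. Qed.

Lemma hodge_0146 (T : form3 R) : hodge3 T (O7 0) (O7 1) (O7 4) (O7 6) = orient R * (- T (O7 2) (O7 3) (O7 5)).
Proof. by rewrite hodgeF enum7 bigop.unlock /= /sgnN /=; ring. Qed.

Lemma hodge_0156 (T : form3 R) : hodge3 T (O7 0) (O7 1) (O7 5) (O7 6) = orient R * ( T (O7 2) (O7 3) (O7 4)).
Proof. by rewrite hodgeF enum7 bigop.unlock /= /sgnN /=; ring. Qed.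

Lemma hodge_0234 (T : form3 R) : hodge3 T (O7 0) (O7 2) (O7 3) (O7 4) = orient R * (- T (O7 1) (O7 5) (O7 6)).
Proof. by rewrite hodgeF enum7 bigop.unlock /= /sgnN /=; ring. Qed.

Lemma hodge_0235 (T : form3 R) : hodge3 T (O7 0) (O7 2) (O7 3) (O7 5) = orient R * ( T (O7 1) (O7 4) (O7 6)).
Proof. by rewrite hodgeF enum7 bigop.unlock /= /sgnN /=; ring. Qed.

Lemma hodge_0236 (T : form3 R) : hodge3 T (O7 0) (O7 2) (O7 3) (O7 6) = orient R * (- T (O7 1) (O7 4) (O7 5)).
Proof. by rewrite hodgeF enum7 bigop.unlock /= /sgnN /=; ring. Qed.

Lemma hodge_0245 (T : form3 R) : hodge3 T (O7 0) (O7 2) (O7 4) (O7 5) = orient R * (- T (O7 1) (O7 3) (O7 6)).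
Proof. by rewrite hodgeF enum7 bigop.unlock /= /sgnN /=; ring. Qed.

Lemma hodge_0246 (T : form3 R) : hodge3 T (O7 0) (O7 2) (O7 4) (O7 6) = orient R * ( T (O7 1) (O7 3) (O7 5)).
Proof. by rewrite hodgeF enum7 bigop.unlock /= /sgnN /=; ring. Qed.

Lemma hodge_0256 (T : form3 R) : hodge3 T (O7 0) (O7 2) (O7 5) (O7 6) = orient R * (- T (O7 1) (O7 3) (O7 4)).
Proof. by rewrite hodgeF enum7 bigop.unlock /= /sgnN /=; ring. Qed.

Lemma hodge_0345 (T : form3 R) : hodge3 T (O7 0) (O7 3) (O7 4) (O7 5) = orient R * ( T (O7 1) (O7 2) (O7 6)).
Proof. by rewrite hodgeF enum7 bigop.unlock /= /sgnN /=; ring. Qed.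

Lemma hodge_0346 (T : form3 R) : hodge3 T (O7 0) (O7 3) (O7 4) (O7 6) = orient R * (- T (O7 1) (O7 2) (O7 5)).
Proof. by rewrite hodgeF enum7 bigop.unlock /= /sgnN /=; ring. Qed.

Lemma hodge_0356 (T : form3 R) : hodge3 T (O7 0) (O7 3) (O7 5) (O7 6) = orient R * ( T (O7 1) (O7 2) (O7 4)).
Proof. by rewrite hodgeF enum7 bigop.unlock /= /sgnN /=; ring. Qed.

Lemma hodge_0456 (T : form3 R) : hodge3 T (O7 0) (O7 4) (O7 5) (O7 6) = orient R * (- T (O7 1) (O7 2) (O7 3)).
Proof. by rewrite hodgeF enum7 bigop.unlock /= /sgnN /=; ring. Qed.

Lemma hodge_1234 (T : form3 R) : hodge3 T (O7 1) (O7 2) (O7 3) (O7 4) = orient R * ( T (O7 0) (O7 5) (O7 6)).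
Proof. by rewrite hodgeF enum7 bigop.unlock /= /sgnN /=; ring. Qed.

Lemma hodge_1235 (T : form3 R) : hodge3 T (O7 1) (O7 2) (O7 3) (O7 5) = orient R * (- T (O7 0) (O7 4) (O7 6)).
Proof. by rewrite hodgeF enum7 bigop.unlock /= /sgnN /=; ring. Qed.

Lemma hodge_1236 (T : form3 R) : hodge3 T (O7 1) (O7 2) (O7 3) (O7 6) = orient R * ( T (O7 0) (O7 4) (O7 5)).
Proof. by rewrite hodgeF enum7 bigop.unlock /= /sgnN /=; ring. Qed.

Lemma hodge_1245 (T : form3 R) : hodge3 T (O7 1) (O7 2) (O7 4) (O7 5) = orient R * ( T (O7 0) (O7 3) (O7 6)).
Proof. by rewrite hodgeF enum7 bigop.unlock /= /sgnN /=; ring. Qed.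

Lemma hodge_1246 (T : form3 R) : hodge3 T (O7 1) (O7 2) (O7 4) (O7 6) = orient R * (- T (O7 0) (O7 3) (O7 5)).
Proof. by rewrite hodgeF enum7 bigop.unlock /= /sgnN /=; ring. Qed.

Lemma hodge_1256 (T : form3 R) : hodge3 T (O7 1) (O7 2) (O7 5) (O7 6) = orient R * ( T (O7 0) (O7 3) (O7 4)).
Proof. by rewrite hodgeF enum7 bigop.unlock /= /sgnN /=; ring. Qed.

Lemma hodge_1345 (T : form3 R) : hodge3 T (O7 1) (O7 3) (O7 4) (O7 5) = orient R * (- T (O7 0) (O7 2) (O7 6)).
Proof. by rewrite hodgeF enum7 bigop.unlock /= /sgnN /=; ring. Qed.

Lemma hodge_1346 (T : form3 R) : hodge3 T (O7 1) (O7 3) (O7 4) (O7 6) = orient R * ( T (O7 0) (O7 2) (O7 5)).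
Proof. by rewrite hodgeF enum7 bigop.unlock /= /sgnN /=; ring. Qed.

Lemma hodge_1356 (T : form3 R) : hodge3 T (O7 1) (O7 3) (O7 5) (O7 6) = orient R * (- T (O7 0) (O7 2) (O7 4)).
Proof. by rewrite hodgeF enum7 bigop.unlock /= /sgnN /=; ring. Qed.

Lemma hodge_1456 (T : form3 R) : hodge3 T (O7 1) (O7 4) (O7 5) (O7 6) = orient R * ( T (O7 0) (O7 2) (O7 3)).
Proof. by rewrite hodgeF enum7 bigop.unlock /= /sgnN /=; ring. Qed.

Lemma hodge_2345 (T : form3 R) : hodge3 T (O7 2) (O7 3) (O7 4) (O7 5) = orient R * ( T (O7 0) (O7 1) (O7 6)).
Proof. by rewrite hodgeF enum7 bigop.unlock /= /sgnN /=; ring. Qed.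

Lemma hodge_2346 (T : form3 R) : hodge3 T (O7 2) (O7 3) (O7 4) (O7 6) = orient R * (- T (O7 0) (O7 1) (O7 5)).
Proof. by rewrite hodgeF enum7 bigop.unlock /= /sgnN /=; ring. Qed.

Lemma hodge_2356 (T : form3 R) : hodge3 T (O7 2) (O7 3) (O7 5) (O7 6) = orient R * ( T (O7 0) (O7 1) (O7 4)).
Proof. by rewrite hodgeF enum7 bigop.unlock /= /sgnN /=; ring. Qed.

Lemma hodge_2456 (T : form3 R) : hodge3 T (O7 2) (O7 4) (O7 5) (O7 6) = orient R * (- T (O7 0) (O7 1) (O7 3)).
Proof. by rewrite hodgeF enum7 bigop.unlock /= /sgnN /=; ring. Qed.

Lemma hodge_3456 (T : form3 R) : hodge3 T (O7 3) (O7 4) (O7 5) (O7 6) = orient R * ( T (O7 0) (O7 1) (O7 2)).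
Proof. by rewrite hodgeF enum7 bigop.unlock /= /sgnN /=; ring. Qed.

Lemma PF (X : vec7 R) (f : R) (s : seq R) :
  clif3 (ctr4 X (fun i j k l => f * hodge3 (omega3 (colL s)) i j k l)) *m colL s =
  (4 * f * sp (colL s) (colL s)) *: (clif1 X *m colL s).
Proof.
apply/matrixP => r c; rewrite [c]ord1 clif3E mxE clif1E sp_colL enum7 bigop.unlock /=.
rewrite ctr4_012 ctr4_013 ctr4_014 ctr4_015 ctr4_016 ctr4_023 ctr4_024 ctr4_025 ctr4_026 ctr4_034 ctr4_035 ctr4_036 ctr4_045 ctr4_046 ctr4_056 ctr4_123 ctr4_124 ctr4_125 ctr4_126 ctr4_134 ctr4_135 ctr4_136 ctr4_145 ctr4_146 ctr4_156 ctr4_234 ctr4_235 ctr4_236 ctr4_245 ctr4_246 ctr4_256 ctr4_345 ctr4_346 ctr4_356 ctr4_456.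
rewrite omegaF /dotL /=.
case: r => [[|[|[|[|[|[|[|[|]]]]]]]] Hr] //=.
all: rewrite /orient; ring.
Qed.

Lemma PQ (X : vec7 R) (f : R) (s : seq R) :
  clif5 (wedge14 X (fun i j k l => f * hodge3 (omega3 (colL s)) i j k l)) *m colL s =
  (-3 * f * sp (colL s) (colL s)) *: (clif1 X *m colL s).
Proof.
apply/matrixP => r c; rewrite [c]ord1 clif5E mxE clif1E sp_colL enum7 bigop.unlock /=.
rewrite /wedge14 hodge_0123 hodge_0124 hodge_0125 hodge_0126 hodge_0134 hodge_0135 hodge_0136 hodge_0145 hodge_0146 hodge_0156 hodge_0234 hodge_0235 hodge_0236 hodge_0245 hodge_0246 hodge_0256 hodge_0345 hodge_0346 hodge_0356 hodge_0456 hodge_1234 hodge_1235 hodge_1236 hodge_1245 hodge_1246 hodge_1256 hodge_1345 hodge_1346 hodge_1356 hodge_1456 hodge_2345 hodge_2346 hodge_2356 hodge_2456 hodge_3456.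
rewrite omegaF /dotL /=.
case: r => [[|[|[|[|[|[|[|[|]]]]]]]] Hr] //=.
all: rewrite /orient; ring.
Qed.
End S2.



Section S4.
Variable R : realFieldType.

Lemma mainId (s : seq R) (p q a f : R) (X : vec7 R) :
  (clif1 X + (1/4) *: clif2 (ctr3 X (fun i j k => a * omega3 (colL s) i j k))
     + p *: clif3 (ctr4 X (fun i j k l => f * hodge3 (omega3 (colL s)) i j k l))
     + q *: clif5 (wedge14 X (fun i j k l => f * hodge3 (omega3 (colL s)) i j k l))) *m colL s
  = (1 + (1/4) * (3 * a * sp (colL s) (colL s)) + p * (4 * f * sp (colL s) (colL s))
      + q * (-3 * f * sp (colL s) (colL s))) *: (clif1 X *m colL s).
Proof.
by rewrite !mulmxDl -!scalemxAl PT PF PQ !scalerA !scalerDl scale1r.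
Qed.

Lemma colL_Psi (Psi : 'cV[R]_8) : Psi = colL [:: Psi (@Ordinal 8 0 isT) 0; Psi (@Ordinal 8 1 isT) 0;
  Psi (@Ordinal 8 2 isT) 0; Psi (@Ordinal 8 3 isT) 0; Psi (@Ordinal 8 4 isT) 0;
  Psi (@Ordinal 8 5 isT) 0; Psi (@Ordinal 8 6 isT) 0; Psi (@Ordinal 8 7 isT) 0].
Proof.
apply/matrixP => r c; rewrite [c]ord1 mxE.
by case: r => [[|[|[|[|[|[|[|[|]]]]]]]] Hr] //=; congr (Psi _ _); apply: val_inj.
Qed.

Lemma spZ (c : R) (u v : 'cV[R]_8) : sp (c *: u) v = c * sp u v.
Proof. by rewrite /sp mulr_sumr; apply: eq_bigr => l _; rewrite mxE mulrA. Qed.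

Definition e0 : vec7 R := fun i => if i == O7 0 then 1 else 0.

Lemma clif1e0 (s : seq R) : sp (clif1 e0 *m colL s) (clif1 e0 *m colL s) = sp (colL s) (colL s).
Proof.
rewrite /clif1 /e0 enum7 bigop.unlock /= !scale0r scale1r !addr0 gamL !sp_colL /=.
ring.
Qed.

Lemma adm_iff (s : seq R) (p q a f : R) : sp (colL s) (colL s) = 1 ->
  (admissible p q (colL s) (fun i j k => a * omega3 (colL s) i j k)
                        (fun i j k l => f * hodge3 (omega3 (colL s)) i j k l)
   <-> 1 + (1/4) * (3 * a) + p * (4 * f) + q * (-3 * f) = 0).
Proof.
move=> H1; split.
- move=> /(_ e0); rewrite mainId H1 !mulr1 => H.
  have := congr1 (fun v => sp v (clif1 e0 *m colL s)) H.
  rewrite /= spZ clif1e0 H1 mulr1 => ->.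
  by rewrite /sp big1 // => l _; rewrite mxE mul0r.
- move=> H X; rewrite mainId H1 !mulr1 H; exact: scale0r.
Qed.

End S4.

Unset Implicit Arguments.

Theorem mainTheorem4 (R : realFieldType) (Psi : 'cV[R]_8) (p q : R) :
  sp Psi Psi = 1 ->
  (forall a f : R,
     admissible p q Psi (fun i j k => a * omega3 Psi i j k)
                        (fun i j k l => f * hodge3 (omega3 Psi) i j k l)
     <-> a = (12 * q - 16 * p) * f / 3 - 4 / 3)
  /\
  (4 * p - 3 * q = 0 -> forall a f : R,
     admissible p q Psi (fun i j k => a * omega3 Psi i j k)
                        (fun i j k l => f * hodge3 (omega3 Psi) i j k l)
     <-> a = - (4 / 3)).
Proof.
rewrite (colL_Psi Psi).
set s := [:: _; _; _; _; _; _; _; _] => H1.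
have key : forall a f, admissible p q (colL s) (fun i j k => a * omega3 (colL s) i j k)
                        (fun i j k l => f * hodge3 (omega3 (colL s)) i j k l)
     <-> a = (12 * q - 16 * p) * f / 3 - 4 / 3.
  move=> a f; rewrite adm_iff //.
  have n3 : (3 : R) != 0 by rewrite pnatr_eq0.
  have n4 : (4 : R) != 0 by rewrite pnatr_eq0.
  split => H.
  + apply/eqP; rewrite -subr_eq0.
    have -> : a - ((12 * q - 16 * p) * f / 3 - 4 / 3) =
       4 / 3 * (1 + (1/4) * (3 * a) + p * (4 * f) + q * (-3 * f)) by field.
    by rewrite H mulr0.
  + by rewrite H; field.
split; first exact: key.
move=> Hpq a f; rewrite key.
have -> : (12 * q - 16 * p) * f / 3 - 4 / 3 = - 4 * (4 * p - 3 * q) * f / 3 - 4 / 3 by ring.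
by rewrite Hpq mulr0 !mul0r sub0r.
Qed.
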